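(* Let $\mathcal{S}=\{1,\dots,S\}$, $T>0$, and let $R_t$ be the rate matrix of a forward CTMC with $X_0\sim p_{\text{data}}$, conditionals $q_{t|0}(\cdot\mid x_0)$ and marginals $q_t$; let $\hat\lambda_t,\hat r_t$ be the true reverse exit rates and jump distributions and $\lambda^\theta_t,r^\theta_t$ the model exit rates and jump distributions. For $x_0\in\mathcal{S}$ define \[ \hat\lambda_{t|0}(i\mid x_0):=\sum_{j\neq i}R_t(j,i)\frac{q_{t|0}(j\mid x_0)}{q_{t|0}(i\mid x_0)},\qquad \hat r_{t|0}(j\mid i,x_0):=\frac{R_t(j,i)\frac{q_{t|0}(j\mid x_0)}{q_{t|0}(i\mid x_0)}}{\hat\lambda_{t|0}(i\mid x_0)}. \] Let $\mathcal{L}(\theta):=\mathbb{E}_{t\sim\mathcal{U}(0,T),\,x_t\sim q_t}\bigl[\mathrm{KL}^{\text{Poi}}(\hat\lambda_t(x_t)\|\lambda^\theta_t(x_t))+\hat\lambda_t(x_t)\,\mathrm{CE}(\hat r_t(\cdot\mid x_t),r^\theta_t(\cdot\mid x_t))\bigr]$. Then \[ \mathcal{L}(\theta)=\mathbb{E}_{t\sim\mathcal{U}(0,T),\,x_0\sim p_{\text{data}},\,x_t\sim q_{t|0}(\cdot\mid x_0)}\Bigl[-\sum_{j\neq x_t}R_t(j,x_t)\frac{q_{t|0}(j\mid x_0)}{q_{t|0}(x_t\mid x_0)}\log\bigl(\lambda^\theta_t(x_t)r^\theta_t(j\mid x_t)\bigr)-\hat\lambda_{t|0}(x_t\mid x_0)+\lambda^\theta_t(x_t)\Bigr]+\mathrm{const},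 \] where the constant does not depend on $\theta$.
   Context: A rate matrix $R_t$ satisfies $R_t(i,j)\ge0$ ($i\ne j$), $\sum_jR_t(i,j)=0$. $q_{t|0}(i\mid x_0)=\mathbb{P}(X_t=i\mid X_0=x_0)$, $q_t(i)=\sum_{x_0}p_{\text{data}}(x_0)q_{t|0}(i\mid x_0)$. True reverse rates $\hat R_t(i,j)=R_t(j,i)q_t(j)/q_t(i)$, $\hat\lambda_t(i)=\sum_{j\ne i}\hat R_t(i,j)$, $\hat r_t(j\mid i)=\hat R_t(i,j)/\hat\lambda_t(i)$. Model: $\lambda^\theta_t(i)>0$, $r^\theta_t(\cdot\mid i)$ a probability distribution on $\mathcal{S}\setminus\{i\}$. $\mathrm{KL}^{\text{Poi}}(\lambda\|\lambda')=\lambda\log\frac{\lambda}{\lambda'}-\lambda+\lambda'$, $\mathrm{CE}(\hat r,r)=-\sum_{j\ne i}\hat r(j\mid i)\log r(j\mid i)$. All ratios and logarithms are assumed well defined (e.g. conditional probabilities positive). *)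

(* Defs.v *)
From HB Require Import structures.
From mathcomp Require Import all_boot all_order all_algebra.
From mathcomp Require Import all_classical all_reals all_analysis.
Set Implicit Arguments. Unset Strict Implicit. Unset Printing Implicit Defensive.
Import Order.TTheory GRing.Theory Num.Theory.
Import numFieldNormedType.Exports.
Local Open Scope classical_set_scope.
Local Open Scope ring_scope.

Section Defs.
Variables (R : realType) (S : nat).

Definition rate_matrix (Rm : 'I_S -> 'I_S -> R) : Prop :=
  (forall i j, i != j -> 0 <= Rm i j) /\ (forall i, \sum_j Rm i j = 0).

(* Conventions: Rt t i j = R_t(i,j); q t x0 i = q_{t|0}(i | x0);
   p x0 = p_data(x0). *)
Variables (Rt : R -> 'I_S -> 'I_S -> R) (q : R -> 'I_S -> 'I_S -> R)
          (p : 'I_S -> R).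

Definition qmarg (t : R) (i : 'I_S) : R := \sum_x0 p x0 * q t x0 i.

Definition Rhat (t : R) (i j : 'I_S) : R := Rt t j i * qmarg t j / qmarg t i.

Definition lamhat (t : R) (i : 'I_S) : R := \sum_(j | j != i) Rhat t i j.

Definition rhat (t : R) (j i : 'I_S) : R := Rhat t i j / lamhat t i.

Definition lamhat_cond (t : R) (i x0 : 'I_S) : R :=
  \sum_(j | j != i) Rt t j i * (q t x0 j / q t x0 i).

Definition rhat_cond (t : R) (j i x0 : 'I_S) : R :=
  Rt t j i * (q t x0 j / q t x0 i) / lamhat_cond t i x0.

End Defs.

Definition KLpoi (R : realType) (l l' : R) : R := l * ln (l / l') - l + l'.

Definition CE (R : realType) (S : nat) (i : 'I_S) (rh r : 'I_S -> R) : R :=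
  - \sum_(j | j != i) rh j * ln (r j).

Section Loss.
Variables (R : realType) (S : nat) (Theta : Type)
  (Rt : R -> 'I_S -> 'I_S -> R) (q : R -> 'I_S -> 'I_S -> R) (p : 'I_S -> R)
  (lam : Theta -> R -> 'I_S -> R) (r : Theta -> R -> 'I_S -> 'I_S -> R).
(* lam th t i = \lambda^\theta_t(i);  r th t j i = r^\theta_t(j | i) *)

Definition loss_integrand (th : Theta) (t : R) : R :=
  \sum_i qmarg q p t i *
    (KLpoi (lamhat Rt q p t i) (lam th t i)
     + lamhat Rt q p t i * CE i (fun j => rhat Rt q p t j i) (fun j => r th t j i)).

Definition cond_integrand (th : Theta) (t : R) : R :=
  \sum_x0 p x0 * \sum_i q t x0 i *
    (- (\sum_(j | j != i) Rt t j i * (q t x0 j / q t x0 i)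
                          * ln (lam th t i * r th t j i))
     - lamhat_cond Rt q t i x0 + lam th t i).

(* t ~ U(0,T): expectation = (1/T) * integral over ]0,T[ w.r.t. Lebesgue measure *)
Definition loss (T : R) (th : Theta) : R :=
  T^-1 * Rintegral lebesgue_measure `]0, T[ (loss_integrand th).

Definition cond_loss (T : R) (th : Theta) : R :=
  T^-1 * Rintegral lebesgue_measure `]0, T[ (cond_integrand th).

End Loss.

(* Main.v *)
Set Warnings "-all".
Require Import Defs.
From HB Require Import structures.
From mathcomp Require Import all_boot all_order all_algebra.
From mathcomp Require Import all_classical all_reals all_analysis.
From mathcomp Require Import ring lra.
Import Order.TTheory GRing.Theory Num.Theory.
Import numFieldNormedType.Exports.
Local Open Scope classical_set_scope.
Local Open Scope ring_scope.
Set Implicit Arguments. Unset Strict Implicit.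

Definition cterm (R : realType) (S : nat)
  (Rt : R -> 'I_S -> 'I_S -> R) (q : R -> 'I_S -> 'I_S -> R) (p : 'I_S -> R) (t : R) : R :=
  \sum_i (qmarg q p t i * (lamhat Rt q p t i * ln (lamhat Rt q p t i) - lamhat Rt q p t i)
          + \sum_x0 p x0 * (q t x0 i * lamhat_cond Rt q t i x0)).

Lemma pointwise (R : realType) (S : nat) (Theta : Type)
  (Rt : R -> 'I_S -> 'I_S -> R) (q : R -> 'I_S -> 'I_S -> R) (p : 'I_S -> R)
  (lam : Theta -> R -> 'I_S -> R) (r : Theta -> R -> 'I_S -> 'I_S -> R) th t :
  rate_matrix (Rt t) ->
  (forall x0, 0 <= p x0) -> \sum_x0 p x0 = 1 ->
  (forall x0 i, 0 < q t x0 i) ->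
  (forall i, 0 < lam th t i) ->
  (forall i j, j != i -> 0 < r th t j i) ->
  loss_integrand Rt q p lam r th t = cond_integrand Rt q p lam r th t + cterm Rt q p t.
Proof.
move=> [hR0 _] hp hp1 hq hlam hr.
have Qpos : forall i, 0 < qmarg q p t i.
  move=> i; rewrite lt_def sumr_ge0 ?andbT; last by move=> x _; rewrite mulr_ge0 // ltW.
  apply/eqP => /psumr_eq0P H.
  have : \sum_x0 p x0 = 0.
    apply: big1 => x _; have := H (fun x _ => mulr_ge0 (hp x) (ltW (hq x i))) x isT.
    by move/eqP; rewrite mulf_eq0 (gt_eqF (hq x i)) orbF => /eqP.
  by rewrite hp1 => /eqP; rewrite oner_eq0.
have QRhat : forall i j, qmarg q p t i * Rhat Rt q p t i j = Rt t j i * qmarg q p t j.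
  move=> i j; rewrite /Rhat; field; exact: lt0r_neq0 (Qpos i).
have Rhat0 : forall i j, j != i -> 0 <= Rhat Rt q p t i j.
  move=> i j ji; rewrite /Rhat; apply: divr_ge0; last exact: ltW (Qpos i).
  by apply: mulr_ge0; [apply: hR0|exact: ltW (Qpos j)].
have lh0 : forall i, 0 <= lamhat Rt q p t i by move=> i; exact: sumr_ge0 (Rhat0 i).
have lhr : forall i j, j != i -> lamhat Rt q p t i * rhat Rt q p t j i = Rhat Rt q p t i j.
  move=> i j ji; rewrite /rhat; have [e|nz] := eqVneq (lamhat Rt q p t i) 0.
    by rewrite e mul0r; symmetry; apply: (psumr_eq0P (Rhat0 i) e).
  by rewrite mulrCA divff // mulr1.
rewrite /loss_integrand /cond_integrand /cterm.
under [X in _ = X + _]eq_bigr do rewrite mulr_sumr.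
rewrite exchange_big /= -big_split /=; apply: eq_bigr => i _.
set Q := qmarg q p t i; set lh := lamhat Rt q p t i; set lm := lam th t i.
have hKL : lh * ln (lh / lm) = lh * ln lh - lh * ln lm.
  have [->|nz] := eqVneq lh 0; first by rewrite !mul0r subr0.
  have lhp : 0 < lh by rewrite lt_def nz lh0.
  by rewrite ln_div ?posrE // ?hlam // mulrBr.
have hQl : Q * lh = \sum_(j | j != i) Rt t j i * qmarg q p t j.
  by rewrite /lh /lamhat mulr_sumr; apply: eq_bigr => j _; rewrite QRhat.
have hCE : Q * (lh * CE i (fun j => rhat Rt q p t j i) (fun j => r th t j i)) =
   - \sum_(j | j != i) Rt t j i * qmarg q p t j * ln (r th t j i).
  rewrite /CE !mulrN mulr_sumr mulr_sumr; congr (- _); apply: eq_bigr => j ji.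
  by rewrite mulrA mulrA -(mulrA Q) lhr // QRhat.
have hA : \sum_x0 p x0 * (q t x0 i * (\sum_(j | j != i) Rt t j i * (q t x0 j / q t x0 i)
                          * ln (lm * r th t j i))) =
   Q * lh * ln lm + \sum_(j | j != i) Rt t j i * qmarg q p t j * ln (r th t j i).
  rewrite hQl mulr_suml -big_split /=.
  under eq_bigr do rewrite mulr_sumr mulr_sumr.
  rewrite exchange_big /=; apply: eq_bigr => j ji.
  rewrite /qmarg mulr_sumr mulr_suml mulr_suml -big_split /=; apply: eq_bigr => x0 _.
  rewrite lnM ?posrE ?hlam ?hr //.
  have := hq x0 i; move: (q t x0 i) => a ha; field; exact: lt0r_neq0.
have hB : \sum_x0 p x0 * (q t x0 i *
     (- (\sum_(j | j != i) Rt t j i * (q t x0 j / q t x0 i) * ln (lm * r th t j i))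
      - lamhat_cond Rt q t i x0 + lm)) =
  Q * lm - \sum_x0 p x0 * (q t x0 i * (\sum_(j | j != i) Rt t j i * (q t x0 j / q t x0 i)
                          * ln (lm * r th t j i)))
   - \sum_x0 p x0 * (q t x0 i * lamhat_cond Rt q t i x0).
  rewrite /Q /qmarg mulr_suml -!sumrB; apply: eq_bigr => x0 _; ring.
rewrite hB hA /KLpoi mulrDr hCE hKL.
move: (\sum_(j | j != i) _ ) => s1; move: (\sum_x0 _) => s2.
ring.
Qed.

Theorem proposition4p6 (R : realType) (S : nat) (T : R) (Theta : Type)
  (Rt : R -> 'I_S -> 'I_S -> R) (q : R -> 'I_S -> 'I_S -> R) (p : 'I_S -> R)
  (lam : Theta -> R -> 'I_S -> R) (r : Theta -> R -> 'I_S -> 'I_S -> R) :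
  0 < T ->
  (* forward rate matrices *)
  (forall t, rate_matrix (Rt t)) ->
  (* data distribution *)
  (forall x0, 0 <= p x0) -> \sum_x0 p x0 = 1 ->
  (* q_{t|0}(.|x0) are the transition probabilities of the forward CTMC:
     Kolmogorov forward equation with initial condition delta_{x0} *)
  (forall x0 i, q 0 x0 i = (i == x0)%:R) ->
  (forall x0 i, {within `[0, T], continuous (fun s => q s x0 i)}) ->
  (forall x0 i t, 0 < t < T ->
     is_derive t 1 (fun s => q s x0 i) (\sum_j q t x0 j * Rt t j i)) ->
  (forall t x0 i, 0 <= t <= T -> 0 <= q t x0 i) ->
  (forall t x0, 0 <= t <= T -> \sum_i q t x0 i = 1) ->
  (* well-definedness: conditional probabilities positive *)
  (forall t x0 i, 0 < t < T -> 0 < q t x0 i) ->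
  (* model: positive exit rates, jump distributions on S \ {i} (positive) *)
  (forall th t i, 0 < lam th t i) ->
  (forall th t i j, j != i -> 0 < r th t j i) ->
  (forall th t i, \sum_(j | j != i) r th t j i = 1) ->
  (* the two objectives are finite *)
  (forall th, lebesgue_measure.-integrable `]0, T[
                (fun t => (loss_integrand Rt q p lam r th t)%:E)) ->
  (forall th, lebesgue_measure.-integrable `]0, T[
                (fun t => (cond_integrand Rt q p lam r th t)%:E)) ->
  exists C : R, forall th : Theta,
    loss Rt q p lam r T th = cond_loss Rt q p lam r T th + C.
Proof.
move=> T0 hR hp hp1 _ _ _ _ _ hq hlam hr _ hf hg.
exists (T^-1 * Rintegral lebesgue_measure `]0, T[ (cterm Rt q p)) => th.
rewrite /loss /cond_loss -mulrDr; congr (_ * _).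
have -> : Rintegral lebesgue_measure `]0, T[ (cterm Rt q p) =
  Rintegral lebesgue_measure `]0, T[ (fun t => loss_integrand Rt q p lam r th t
                                         - cond_integrand Rt q p lam r th t).
  apply: eq_Rintegral => x; rewrite inE /= in_itv /= => hx.
  by rewrite (pointwise (hR x) hp hp1 (fun x0 i => hq x x0 i hx) (hlam th x) (hr th x)) addrC addKr.
rewrite (RintegralB _ (hf th) (hg th)); last exact: measurable_itv.
by rewrite addrC subrK.
Qed.
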